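(* Let $R$ be the holistic system robustness random variable (defined in the context), with distribution $\pi_R$, so that $\mathbb{P}_{\pi_R}[-R\le a]=1$. Let $\epsilon\in(0,1)$, $\gamma\in[0,1)$, $\alpha\in(0,1]$, and define \[ L(x,\mu,t)=t\left(\mu+e^{\frac{x}{t}-\mu-\ln(\alpha)-1}\right),\qquad u_b(\mu,t)=L(a,\mu,t). \] Let $r_1,\dots,r_N$ be independent samples of $R$ with $N\ge\frac{\log(1-\gamma)}{\log(1-\epsilon)}$, and $\zeta^*_N(\mu,t)=\max_{1\le k\le N}L(-r_k,\mu,t)$. Then \[ \mathbb{P}^N_{\pi_R}\left[r^*_E\triangleq\inf_{\mu\in\mathbb{R},\ t>0}\zeta^*_N(\mu,t)(1-\epsilon)+u_b(\mu,t)\epsilon\ \ge\ \mathrm{EVaR}_\alpha(-R)\right]\ge\gamma. \]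
   Context: System setting: $\dot x = f(x,u)+\xi$, $x\in\mathcal{X}\subset\mathbb{R}^n$, $u=U(x,\theta)\in\mathcal{U}\subset\mathbb{R}^m$, $\theta\in\Theta\subset\mathbb{R}^p$ a parameter fixed along a trajectory, and $\xi$ stochastic noise with unknown distribution $\pi_\xi(x,u,t)$. $x^\theta$ denotes the resulting closed-loop state signal in $\mathcal{S}=\{s:\mathbb{R}_{\ge0}\to\mathbb{R}^n\}$ from an initial condition $x_0\in\mathcal{X}_0\subseteq\mathcal{X}$. A robustness metric is a function $\rho:\mathcal{S}\to[-a,b]$ with $a,b>0$ such that $\rho(s)\ge0$ only for signals exhibiting desired properties. The holistic system robustness $R$ is the scalar random variable whose samples are $r=\rho(x^\theta)$, where $(x_0,\theta)$ is sampled uniformly from $\mathcal{X}_0\times\Theta$. $\mathrm{EVaR}_\alpha(Z)=\inf_{z>0}\frac1z\ln\left(\frac{\mathbb{E}[e^{zZ}]}{\alpha}\right)$. $\zeta^*_N(\mu,t)$ is the solution of $\min_\zeta\zeta$ s.t. $\zeta\ge L(-r_i,\mu,t)$ for all $i$; $\mathbb{P}^N_{\pi_R}$ is the $N$-fold product measure of the i.i.d. sample. *)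

(* Defs.v *)
From HB Require Import structures.
From mathcomp Require Import all_boot all_order all_algebra.
From mathcomp Require Import all_classical all_reals all_analysis.
Set Implicit Arguments. Unset Strict Implicit. Unset Printing Implicit Defensive.
Import Order.TTheory GRing.Theory Num.Theory.
Local Open Scope classical_set_scope.
Local Open Scope ring_scope.

(* Mutual independence of a finite family of real random variables:
   product rule for all families of Borel sets (taking B i = setT covers
   every subfamily). *)
Definition mutually_independent d (T : measurableType d) (R : realType)
  (P : probability T R) (N : nat) (X : 'I_N -> T -> R) : Prop :=
  forall B : 'I_N -> set R, (forall i, measurable (B i)) ->
    fine (P (\bigcap_(i in [set: 'I_N]) (X i @^-1` B i))) =
    \prod_(i < N) fine (P (X i @^-1` B i)).

Definition EVaR d (T : measurableType d) (R : realType)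
  (P : probability T R) (Z : T -> R) (alpha : R) : R :=
  inf [set z^-1 * ln (Rintegral P setT (fun w => expR (z * Z w)) / alpha)
      | z in `]0, +oo[%classic].

Definition Lfun (R : realType) (alpha x mu t : R) : R :=
  t * (mu + expR (x / t - mu - ln alpha - 1)).

(* zeta*_N(mu,t) = max_{k} L(-r_k, mu, t) (the sup of a finite nonempty set
   is its maximum; for N = 0 the value is irrelevant). *)
Definition zetaN (R : realType) (N : nat) (alpha : R) (r : 'I_N -> R)
  (mu t : R) : R :=
  sup [set Lfun alpha (- r k) mu t | k in [set: 'I_N]].

Definition rstarE (R : realType) (N : nat) (alpha eps a : R) (r : 'I_N -> R)
  : R :=
  inf [set y | exists mu t, 0 < t /\
        y = zetaN alpha r mu t * (1 - eps) + Lfun alpha a mu t * eps].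

(* Main.v *)
Require Import Defs.
From HB Require Import structures.
From mathcomp Require Import all_boot all_order all_algebra.
From mathcomp Require Import all_classical all_reals all_analysis.
From mathcomp Require Import measurable_realfun.
From mathcomp Require Import ring lra.
Import Order.TTheory GRing.Theory Num.Theory.
Local Open Scope classical_set_scope.
Local Open Scope ring_scope.
Lemma Lfun_le (R : realType) (alpha x y mu t : R) : 0 < t -> x <= y ->
  Defs.Lfun alpha x mu t <= Defs.Lfun alpha y mu t.
Proof.
move=> t0 xy; rewrite /Lfun ler_pM2l // lerD2l ler_expR.
rewrite lerD2r lerD2r lerD2r; rewrite ler_pM2r ?invr_gt0 //.
Qed.

Lemma Lfun_ge (R : realType) (alpha x mu t : R) : 0 < t -> 0 < alpha <= 1 ->
  x <= Defs.Lfun alpha x mu t.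
Proof.
move=> t0 /andP[a0 a1]; rewrite /Lfun.
have h := expR_ge1Dx (x / t - mu - ln alpha - 1).
have hl : ln alpha <= 0 by apply: ln_le0.
have : t * (mu + (1 + (x / t - mu - ln alpha - 1))) <= t * (mu + expR (x / t - mu - ln alpha - 1)).
  by rewrite ler_pM2l // lerD2l.
have -> : t * (mu + (1 + (x / t - mu - ln alpha - 1))) = x - t * ln alpha.
  by field; rewrite gt_eqF.
move=> H; apply: le_trans H; have : t * ln alpha <= 0 by rewrite mulr_ge0_le0 //; exact: ltW.
lra.
Qed.
Lemma bigmin_ex_seq (R : realType) (n : nat) (F : 'I_n.+1 -> R) (s : seq 'I_n.+1) :
  exists k, \big[Order.min/F ord0]_(i <- s) F i = F k.
Proof.
elim: s => [|i s [k IH]]; first by exists ord0; rewrite big_nil.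
rewrite big_cons IH /Order.min; case: ifP => _; [by exists i | by exists k].
Qed.

Lemma bigmin_ex (R : realType) (n : nat) (F : 'I_n.+1 -> R) :
  exists k, \big[Order.min/F ord0]_k F k = F k.
Proof. exact: bigmin_ex_seq. Qed.

Lemma zetaN_eq (R : realType) (n : nat) (alpha : R) (r : 'I_n.+1 -> R) mu t :
  0 < t -> zetaN alpha r mu t = Defs.Lfun alpha (- \big[Order.min/r ord0]_k r k) mu t.
Proof.
move=> t0; rewrite /zetaN; have [k hk] := @bigmin_ex _ _ r.
have ub : ubound [set Defs.Lfun alpha (- r k0) mu t | k0 in [set: 'I_n.+1]]
   (Defs.Lfun alpha (- \big[Order.min/r ord0]_k r k) mu t).
  move=> y [j _ <-]; apply: Lfun_le => //; rewrite lerN2; exact: bigmin_le.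
apply/le_anti/andP; split.
  by apply: ge_sup => //; exists (Defs.Lfun alpha (- r k) mu t); exists k.
apply: ub_le_sup; first by exists (Defs.Lfun alpha (- \big[Order.min/r ord0]_k r k) mu t).
by exists k => //; rewrite hk.
Qed.
Lemma mn_meas_seq (R : realType) d (T : measurableType d) (n : nat)
  (r : 'I_n.+1 -> {mfun T >-> R}) (s : seq 'I_n.+1) :
  measurable_fun setT (fun w => \big[Order.min/r ord0 w]_(i <- s) r i w).
Proof.
elim: s => [|i s IH].
  have -> : (fun w => \big[Order.min/r ord0 w]_(i <- [::]) r i w) = (r ord0 : T -> R).
    by apply: funext => w; rewrite big_nil.
  exact: measurable_funP.
have -> : (fun w => \big[Order.min/r ord0 w]_(j <- i :: s) r j w) =
   ((r i : T -> R) \min (fun w => \big[Order.min/r ord0 w]_(j <- s) r j w)).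
  by apply: funext => w; rewrite big_cons.
apply: measurable_minr => //; exact: measurable_funP.
Qed.

Lemma mn_meas (R : realType) d (T : measurableType d) (n : nat)
  (r : 'I_n.+1 -> {mfun T >-> R}) :
  measurable_fun setT (fun w => \big[Order.min/r ord0 w]_(i < n.+1) r i w).
Proof. exact: mn_meas_seq. Qed.

Lemma downset_meas (R : realType) (U : set R) :
  (forall x y, U y -> x <= y -> U x) -> measurable U.
Proof.
move=> dU.
have [U0|/set0P[u0 Uu0]] := eqVneq U set0; first by rewrite U0; exact: measurable0.
have [hub|nub] := pselect (has_ubound U); last first.
  suff -> : U = setT by exact: measurableT.
  apply/seteqP; split => // x _.
  have : ~ ubound U x by move=> h; apply: nub; exists x.
  move=> /existsNP[y] /not_implyP[Uy /negP]; rewrite -ltNge => xy.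
  exact: (dU x y Uy (ltW xy)).
have ne : U !=set0 by exists u0.
have [Us|nUs] := pselect (U (sup U)).
  suff -> : U = `]-oo, sup U]%classic by exact: measurable_itv.
  apply/seteqP; split => x /=; rewrite in_itv /=.
    by move=> Ux; apply: ub_le_sup.
  by move=> xs; apply: (dU _ _ Us).
suff -> : U = `]-oo, sup U[%classic by exact: measurable_itv.
apply/seteqP; split => x /=; rewrite in_itv /=.
  move=> Ux; rewrite lt_neqAle ub_le_sup // andbT; apply/eqP => xs.
  by apply: nUs; rewrite -xs.
move=> xs; have [y Uy xy] := sup_gt ne xs.
exact: (dU _ _ Uy (ltW xy)).
Qed.
Local Open Scope ereal_scope.
Lemma int_cst_up d (T : measurableType d) (R : realType) (P : probability T R)
  (B : set T) (g : T -> R) (c : R) : measurable B ->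
  measurable_fun setT g -> (forall x, (0 <= g x)%R) ->
  (forall x, B x -> (g x <= c)%R) ->
  \int[P]_(x in B) (g x)%:E <= (c * fine (P B))%:E.
Proof.
move=> mB mg g0 gc.
have mgB : measurable_fun B (EFin \o g).
  by apply/measurable_EFinP; apply: measurable_funS mg.
have f10 : forall x, B x -> 0 <= (EFin \o g) x by move=> x _; rewrite lee_fin.
have mf2 : measurable_fun B (fun=> c%:E) by exact: measurable_cst.
have f12 : forall x, B x -> (EFin \o g) x <= c%:E by move=> x Bx; rewrite lee_fin; apply: gc.
apply: le_trans (@ge0_le_integral _ _ _ P B mB _ (fun=> c%:E) f10 mgB mf2 f12) _.
rewrite integral_cst // EFinM fineK //; exact: fin_num_measure.
Qed.

Lemma int_cst_lo d (T : measurableType d) (R : realType) (P : probability T R)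
  (B : set T) (g : T -> R) (c : R) : measurable B ->
  measurable_fun setT g -> (forall x, (0 <= g x)%R) -> (0 <= c)%R ->
  (forall x, B x -> (c <= g x)%R) ->
  (c * fine (P B))%:E <= \int[P]_(x in setT) (g x)%:E.
Proof.
move=> mB mg g0 c0 gc.
have mgB : measurable_fun B (EFin \o g).
  by apply/measurable_EFinP; apply: measurable_funS mg.
have mgT : measurable_fun setT (EFin \o g) by apply/measurable_EFinP.
have f10 : forall x, B x -> 0 <= (fun=> c%:E) x by move=> x _; rewrite lee_fin.
have mf1 : measurable_fun B (fun=> c%:E) by exact: measurable_cst.
have f12 : forall x, B x -> c%:E <= (EFin \o g) x by move=> x Bx; rewrite lee_fin; apply: gc.
have g0' : forall x, setT x -> 0 <= (EFin \o g) x by move=> x _; rewrite lee_fin.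
apply: le_trans (@ge0_subset_integral _ _ _ P B setT mB measurableT (EFin \o g) mgT g0' (@subsetT _ B)).
apply: le_trans (@ge0_le_integral _ _ _ P B mB (fun=> c%:E) _ f10 mf1 mgB f12).
rewrite integral_cst // EFinM fineK //; exact: fin_num_measure.
Qed.
Lemma int_split_up d (T : measurableType d) (R : realType) (P : probability T R)
  (D A : set T) (g : T -> R) (c1 c2 : R) : measurable D -> measurable A ->
  P (~` D) = 0 -> measurable_fun setT g -> (forall x, (0 <= g x)%R) ->
  (forall x, D x -> A x -> (g x <= c1)%R) ->
  (forall x, D x -> ~ A x -> (g x <= c2)%R) ->
  \int[P]_(x in setT) (g x)%:E <=
    (c1 * fine (P (D `&` A)) + c2 * fine (P (D `\` A)))%:E.
Proof.
move=> mD mA PD0 mg g0 h1 h2.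
have mgT : measurable_fun setT (EFin \o g) by apply/measurable_EFinP.
have mCD : measurable (~` D) by exact: measurableC.
rewrite -(setUv D) ge0_integral_setU //; last 3 first.
- by rewrite setUv.
- by move=> x _; rewrite lee_fin.
- rewrite disj_set2E; apply/eqP; apply/seteqP; split => x //= [].
  by move=> ? ?.
rewrite (@null_set_integral _ _ _ P (~` D) (EFin \o g)) //; last first.
  exact: measurable_funS mgT.
rewrite adde0 -{1}(setUIDK D A) ge0_integral_setU //; last 5 first.
- exact: measurableI.
- exact: measurableD.
- exact: measurable_funS mgT.
- by move=> x _; rewrite lee_fin.
- rewrite disj_set2E; apply/eqP; apply/seteqP; split => x //= [[? ?] [? ?]].
  by [].
rewrite EFinD; apply: leeD; apply: int_cst_up => //.
- exact: measurableI.
- by move=> x [? ?]; apply: h1.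
- exact: measurableD.
- by move=> x [? ?]; apply: h2.
Qed.
Local Close Scope ereal_scope.

Lemma g_meas d (T : measurableType d) (R : realType) (Rv : {mfun T >-> R}) (z : R) :
  measurable_fun setT (fun w => expR (z * - Rv w)).
Proof.
have -> : (fun w => expR (z * - Rv w)) = expR \o ((cst (- z)) \* (Rv : T -> R)).
  by apply: funext => w /=; rewrite mulrN mulNr.
apply: measurableT_comp; first exact: measurable_expR.
apply: measurable_funM; first exact: measurable_cst.
exact: measurable_funP.
Qed.

Lemma Iz d (T : measurableType d) (R : realType) (P : probability T R)
  (Rv : {mfun T >-> R}) (a b z s eps : R) :
  0 <= z -> P (Rv @^-1` `[- a, b]) = 1%E -> - a <= s ->
  fine (P (Rv @^-1` `]-oo, s[)) <= eps ->
  expR (- (z * b)) <= Rintegral P setT (fun w => expR (z * - Rv w)) <=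
    expR (z * - s) * (1 - eps) + expR (z * a) * eps.
Proof.
move=> z0 PD sa Ps.
set D := Rv @^-1` `[- a, b].
set A := Rv @^-1` `]-oo, s[.
have mD : measurable D by exact: measurable_funPTI.
have mA : measurable A by exact: measurable_funPTI.
have PCD : P (~` D) = 0%E by rewrite probability_setC // PD subee.
have mg := @g_meas _ _ _ Rv z.
have g0 : forall x, 0 <= expR (z * - Rv x) by move=> x; exact: ltW (expR_gt0 _).
have up := @int_split_up _ _ _ P D A _ (expR (z * a)) (expR (z * - s)) mD mA PCD mg g0.
have lo := @int_cst_lo _ _ _ P D _ (expR (- (z * b))) mD mg g0 (ltW (expR_gt0 _)).
rewrite PD /= mulr1 in lo.
have {}up : (\int[P]_(x in [set: T]) (expR (z * - Rv x))%:E <=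
        (expR (z * a) * fine (P (D `&` A)) + expR (z * - s) * fine (P (D `\` A)))%:E)%E.
  apply: up.
  - move=> x; rewrite /D /= in_itv /= => /andP[h1 h2] _.
    rewrite ler_expR ler_wpM2l //; lra.
  - move=> x _; rewrite /A /= in_itv /= => /negP; rewrite -leNgt => h.
    rewrite ler_expR ler_wpM2l //; lra.
have {}lo : ((expR (- (z * b)))%:E <= \int[P]_(x in [set: T]) (expR (z * - Rv x))%:E)%E.
  apply: lo => x; rewrite /D /= in_itv /= => /andP[h1 h2].
  rewrite ler_expR -mulrN ler_wpM2l //; lra.
set I := (\int[P]_(x in [set: T]) (expR (z * - Rv x))%:E)%E in up lo *.
have If : I \is a fin_num.
  rewrite fin_numE; apply/andP; split.
    by apply/negP => /eqP h; move: lo; rewrite h.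
  by apply/negP => /eqP h; move: up; rewrite h.
have -> : Rintegral P setT (fun w => expR (z * - Rv w)) = fine I by [].
apply/andP; split; first by rewrite -lee_fin fineK.
rewrite -lee_fin fineK //; apply: le_trans up _; rewrite lee_fin.
have mDA : measurable (D `&` A) by exact: measurableI.
have mDA' : measurable (D `\` A) by exact: measurableD.
have q12 : fine (P (D `&` A)) + fine (P (D `\` A)) = 1.
  have : P D = (P (D `&` A) + P (D `\` A))%E.
    rewrite -{1}(setUIDK D A) measureU //.
    by apply/seteqP; split => x // [[? ?] [? ?]].
  rewrite PD -(fineK (fin_num_measure P _ mDA)) -(fineK (fin_num_measure P _ mDA')).
  by move=> /(congr1 fine) /=.
have q1e : fine (P (D `&` A)) <= eps.
  apply: le_trans Ps; apply: fine_le; try exact: fin_num_measure.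
  by apply: le_measure => //; rewrite inE.
have q10 : 0 <= fine (P (D `&` A)) by apply: fine_ge0; exact: measure_ge0.
have c12 : expR (z * - s) <= expR (z * a) by rewrite ler_expR ler_wpM2l //; lra.
nra.
Qed.
Lemma EVaR_set_lb d (T : measurableType d) (R : realType) (P : probability T R)
  (Rv : {mfun T >-> R}) (a b alpha : R) :
  P (Rv @^-1` `[- a, b]) = 1%E -> 0 < alpha <= 1 ->
  lbound [set z^-1 * ln (Rintegral P setT (fun w => expR (z * - Rv w)) / alpha)
      | z in `]0, +oo[%classic] (- b).
Proof.
move=> PD /andP[a0 a1] y [z]; rewrite /= in_itv /= andbT => z0 <-.
have := @Iz _ _ _ P Rv a b z (- a) 1 (ltW z0) PD (lexx _).
have -> : fine (P (Rv @^-1` `]-oo, - a[)) <= 1.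
  have mA : measurable (Rv @^-1` `]-oo, - a[) by exact: measurable_funPTI.
  rewrite -lee_fin fineK ?fin_num_measure //; exact: probability_le1.
move=> /(_ isT) /andP[lo _].
set J := Rintegral _ _ _ in lo *.
have J0 : 0 < J by apply: lt_le_trans lo; exact: expR_gt0.
have JJ : J <= J / alpha.
  by rewrite ler_pdivlMr //; nra.
have : ln (expR (- (z * b))) <= ln (J / alpha).
  rewrite ler_ln ?posrE ?expR_gt0 ?divr_gt0 //; exact: le_trans JJ.
rewrite expRK => h.
have -> : - b = z^-1 * (- (z * b)) by field; rewrite gt_eqF.
by rewrite ler_pM2l ?invr_gt0.
Qed.

Lemma EVaR_le d (T : measurableType d) (R : realType) (P : probability T R)
  (Rv : {mfun T >-> R}) (a b alpha eps s mu t : R) :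
  P (Rv @^-1` `[- a, b]) = 1%E -> 0 < alpha <= 1 -> 0 < t ->
  - a <= s -> fine (P (Rv @^-1` `]-oo, s[)) <= eps ->
  EVaR P (fun w => - Rv w) alpha <=
     Defs.Lfun alpha (- s) mu t * (1 - eps) + Defs.Lfun alpha a mu t * eps.
Proof.
move=> PD /andP[a0 a1] t0 sa Ps.
rewrite /EVaR.
have lb := @EVaR_set_lb _ _ _ P Rv a b alpha PD (introT andP (conj a0 a1)).
have hl : has_lbound [set z^-1 * ln (Rintegral P setT (fun w => expR (z * - Rv w)) / alpha)
      | z in `]0, +oo[%classic] by exists (- b).
have ti : 0 < t^-1 by rewrite invr_gt0.
have Sy : [set z^-1 * ln (Rintegral P setT (fun w => expR (z * - Rv w)) / alpha)
      | z in `]0, +oo[%classic]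
   (t^-1 ^-1 * ln (Rintegral P setT (fun w => expR (t^-1 * - Rv w)) / alpha)).
  by exists t^-1 => //=; rewrite in_itv /= andbT.
apply: le_trans (ge_inf hl Sy) _.
rewrite invrK.
have := @Iz _ _ _ P Rv a b t^-1 s eps (ltW ti) PD sa Ps.
set J := Rintegral _ _ _ => /andP[lo up].
set B := expR (t^-1 * - s) * (1 - eps) + expR (t^-1 * a) * eps in up.
set K := expR (- mu - ln alpha - 1).
have LE x : Defs.Lfun alpha x mu t = t * (mu + expR (t^-1 * x) * K).
  rewrite /Defs.Lfun /K -expRD; congr (t * (mu + expR _)); ring.
rewrite !LE.
have -> : t * (mu + expR (t^-1 * - s) * K) * (1 - eps) + t * (mu + expR (t^-1 * a) * K) * eps
   = t * (mu + K * B) by rewrite /B; ring.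
rewrite ler_pM2l //.
have J0 : 0 < J by apply: lt_le_trans lo; exact: expR_gt0.
have B0 : 0 < B by apply: lt_le_trans up.
have EK : expR (mu + 1) * K = alpha^-1.
  rewrite /K -expRD.
  have -> : mu + 1 + (- mu - ln alpha - 1) = - ln alpha by ring.
  by rewrite expRN lnK // posrE.
have h1 : ln (J / alpha) <= ln (B / alpha).
  by rewrite ler_ln ?posrE ?divr_gt0 // ler_pM2r ?invr_gt0.
apply: le_trans h1 _.
rewrite -[X in _ <= X]expRK ler_ln ?posrE ?divr_gt0 ?expR_gt0 //.
have -> : mu + K * B = (mu + 1) + (K * B - 1) by ring.
rewrite expRD.
have h2 := expR_ge1Dx (K * B - 1).
have -> : B / alpha = expR (mu + 1) * (K * B) by rewrite mulrA EK mulrC.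
rewrite ler_pM2l ?expR_gt0 //; apply: le_trans h2; lra.
Qed.
Lemma cont_le d (T : measurableType d) (R : realType) (P : probability T R)
  (F : nat -> set T) (c : \bar R) : (forall n, measurable (F n)) ->
  (forall n, F n `<=` F n.+1) ->
  (forall n, (P (F n) <= c)%E) -> (P (\bigcup_n F n) <= c)%E.
Proof.
move=> mF ndF Fc.
have mU : measurable (\bigcup_n F n) by exact: bigcupT_measurable.
have ndF' : nondecreasing_seq F.
  by apply/nondecreasing_seqP => n; apply/subsetPset; exact: ndF.
have hc := @nondecreasing_cvg_mu _ _ R P F mF mU ndF'.
rewrite -(cvg_lim (@ereal_hausdorff R) hc).
apply: lime_le; first by apply/cvg_ex; eexists; exact: hc.
exact: nearW.
Qed.
Local Open Scope ring_scope.
Lemma pfin {d} {T : measurableType d} {R : realType} (P : probability T R) (A : set T) :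
  measurable A -> P A = (fine (P A))%:E.
Proof. by move=> mA; rewrite fineK // fin_num_measure. Qed.

Lemma quantile d (T : measurableType d) (R : realType) (P : probability T R)
  (Rv : {mfun T >-> R}) (a b eps : R) :
  0 < eps < 1 -> P (Rv @^-1` `[- a, b]) = 1%E ->
  exists s, - a <= s /\ fine (P (Rv @^-1` `]-oo, s[)) <= eps /\
     fine (P (Rv @^-1` `]s, +oo[)) <= 1 - eps.
Proof.
move=> /andP[e0 e1] PD.
set D := Rv @^-1` `[- a, b].
have mD : measurable D by exact: measurable_funPTI.
have PCD : P (~` D) = 0%E by rewrite probability_setC // PD subee.
pose pA x := Rv @^-1` `]-oo, x[.
have mpA x : measurable (pA x) by exact: measurable_funPTI.
have pAmono x y : x <= y -> fine (P (pA x)) <= fine (P (pA y)).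
  move=> xy; apply: fine_le; try exact: fin_num_measure.
  apply: le_measure; rewrite ?inE //.
  move=> w; rewrite /pA /= !in_itv /= => h; exact: lt_le_trans h xy.
pose V := [set s | fine (P (pA s)) <= eps].
have Va : V (- a).
  rewrite /V /=.
  have : (P (pA (- a)%R) <= P (~` D))%E.
    apply: le_measure; rewrite ?inE //; first exact: measurableC.
    move=> w; rewrite /pA /D /= !in_itv /= => h [/andP[h1 _]].
    by move: h; rewrite ltNge h1.
  rewrite PCD (pfin P _ (mpA _)) lee_fin => h; exact: le_trans h (ltW e0).
have Vb : ubound V b.
  move=> s Vs; rewrite leNgt; apply/negP => bs.
  have : (P D <= P (pA s))%E.
    apply: le_measure; rewrite ?inE //.
    move=> w; rewrite /pA /D /= !in_itv /= => /andP[_ h]; exact: le_lt_trans h bs.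
  rewrite PD (pfin P _ (mpA _)) lee_fin => h.
  by move: Vs; rewrite /V /=; lra.
have hs : has_sup V by split; [exists (- a) | exists b].
set ss := sup V.
have ass : - a <= ss by apply: ub_le_sup => //; case: hs.
have Vss : V ss.
  rewrite /V /=.
  have cu : (P (\bigcup_n pA (ss - n.+1%:R^-1)%R) <= eps%:E)%E.
    apply: cont_le.
    - by move=> n; exact: mpA.
    - move=> n w; rewrite /pA /= !in_itv /= => h; apply: lt_le_trans h _.
      rewrite lerD2l lerN2 lef_pV2 ?posrE // ler_nat; exact: leqnSn.
    - move=> n.
      have : ss - n.+1%:R^-1 < sup V by rewrite ltrBlDr ltrDl invr_gt0.
      move=> /(sup_gt (ex_intro _ (- a) Va)) [v Vv lv].
      rewrite (pfin P _ (mpA _)) lee_fin; apply: le_trans Vv.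
      by apply: pAmono; exact: ltW.
  have -> : pA ss = \bigcup_n pA (ss - n.+1%:R^-1).
    apply/seteqP; split => w; rewrite /pA /= ?in_itv /=.
      move=> h; have [k hk] := ltr_add_invr h.
      by exists k => //=; rewrite in_itv /= ltrBrDr.
    move=> [n _]; rewrite /= in_itv /= => h.
    by apply: lt_le_trans h _; rewrite lerBlDr lerDl invr_ge0.
  have mU : measurable (\bigcup_n pA (ss - n.+1%:R^-1)) by exact: bigcupT_measurable.
  by move: cu; rewrite (pfin P _ mU) lee_fin.
exists ss; split => //; split => //.
pose G n := Rv @^-1` `[ss + n.+1%:R^-1, +oo[.
have mG n : measurable (G n) by exact: measurable_funPTI.
have -> : Rv @^-1` `]ss, +oo[ = \bigcup_n G n.
  apply/seteqP; split => w; rewrite /G /= ?in_itv /= ?andbT.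
    move=> h; have [k hk] := ltr_add_invr h.
    by exists k => //=; rewrite in_itv /= andbT ltW.
  move=> [n _]; rewrite /= in_itv /= andbT => h.
  by apply: lt_le_trans h; rewrite ltrDl invr_gt0.
have mU : measurable (\bigcup_n G n) by exact: bigcupT_measurable.
rewrite -lee_fin -(pfin P _ mU).
apply: cont_le => //.
  move=> n w; rewrite /G /= !in_itv /= !andbT; apply: le_trans.
  rewrite lerD2l lef_pV2 ?posrE // ler_nat; exact: leqnSn.
move=> n.
have -> : G n = ~` pA (ss + n.+1%:R^-1).
  apply/seteqP; split => w; rewrite /G /pA /= !in_itv /= ?andbT.
    by move=> h; apply/negP; rewrite -leNgt.
  by move=> /negP h; rewrite leNgt.
rewrite probability_setC // (pfin P _ (mpA _)) -EFinB lee_fin lerD2l lerN2.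
have : ~ V (ss + n.+1%:R^-1).
  move=> Vx; have := ub_le_sup (proj2 hs) Vx.
  by rewrite -/ss gerDl leNgt invr_gt0 ltr0Sn.
rewrite /V /= => /negP h; apply: ltW; rewrite ltNge; exact: h.
Qed.
Lemma pow_bound (R : realType) (eps gamma : R) (N : nat) :
  0 < eps < 1 -> 0 <= gamma < 1 ->
  ln (1 - gamma) / ln (1 - eps) <= N%:R -> (1 - eps) ^+ N <= 1 - gamma.
Proof.
move=> /andP[e0 e1] /andP[g0 g1] HN.
have L0 : ln (1 - eps) < 0 by apply: ln_lt0; apply/andP; split; lra.
have q : ln (1 - gamma) / ln (1 - eps) * ln (1 - eps) = ln (1 - gamma).
  by rewrite divfK // lt_eqF.
have h : N%:R * ln (1 - eps) <= ln (1 - gamma) by nra.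
rewrite -ler_ln ?posrE ?exprn_gt0 ?subr_gt0 //.
by rewrite lnXn ?subr_gt0 // -mulr_natl.
Qed.

Theorem corollary8 (R : realType) (d : measure_display) (T : measurableType d)
  (P : probability T R) (a b : R) (Rv : {RV P >-> R})
  (eps gamma alpha : R) (N : nat) (r : 'I_N -> {RV P >-> R}) :
  0 < a -> 0 < b ->
  P (Rv @^-1` `[- a, b]) = 1%E ->
  0 < eps < 1 -> 0 <= gamma < 1 -> 0 < alpha <= 1 ->
  (forall i, distribution P (r i) = distribution P Rv) ->
  mutually_independent P (fun i => (r i : T -> R)) ->
  ln (1 - gamma) / ln (1 - eps) <= N%:R ->
  (gamma%:E <= P [set w | (EVaR P (fun w' => - Rv w') alpha <=
                          rstarE alpha eps a (fun k => r k w))%R])%E.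
Proof.
move=> a0 b0 PD epsP gamP alP dist indep HN.
have powb := @pow_bound _ _ _ _ epsP gamP HN.
case/andP: (epsP) => e0 e1; case/andP: (gamP) => g0 g1; case/andP: (alP) => al0 al1.
case: N r dist indep HN powb => [|n] r dist indep HN powb.
  rewrite expr0 in powb.
  have -> : gamma = 0 by apply/le_anti/andP; split => //; lra.
  exact: measure_ge0.
have [ss [ass [Pss Pgt]]] := @quantile _ _ _ P Rv a b eps epsP PD.
pose mn w := \big[Order.min/r ord0 w]_(k < n.+1) r k w.
have mmn : measurable_fun setT mn := @mn_meas _ _ _ n (fun k => r k).
pose f s mu t := Defs.Lfun alpha (- s) mu t * (1 - eps) + Defs.Lfun alpha a mu t * eps.
pose S s := [set y | exists mu t, 0 < t /\ y = f s mu t].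
pose psi s := inf (S s).
pose EV := EVaR P (fun w' => - Rv w') alpha.
have H1 w : rstarE alpha eps a (fun k => r k w) = psi (mn w).
  rewrite /rstarE /psi /S; congr inf; apply/seteqP; split => y [mu [t [t0 ->]]];
    exists mu, t; split => //; rewrite zetaN_eq //.
have Sne s : S s !=set0 by exists (f s 0 1), 0, 1.
have Slb s : has_lbound (S s).
  exists ((- s) * (1 - eps) + a * eps) => y [mu [t [t0 ->]]].
  rewrite /f; apply: lerD.
    by rewrite ler_wpM2r ?subr_ge0 ?(ltW e1) //; apply: Lfun_ge.
  by rewrite ler_wpM2r ?(ltW e0) //; apply: Lfun_ge.
have psi_le s mu t : 0 < t -> psi s <= f s mu t.
  by move=> t0; apply: ge_inf (Slb s) _ _; exists mu, t.
have psi_mono s s' : s <= s' -> psi s' <= psi s.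
  move=> ss'; apply: lb_le_inf (Sne s) _ => y [mu [t [t0 ->]]].
  apply: le_trans (psi_le s' mu t t0) _; rewrite /f lerD2r.
  by rewrite ler_wpM2r ?subr_ge0 ?(ltW e1) //; apply: Lfun_le => //; rewrite lerN2.
pose U := [set s | EV <= psi s].
have dU : forall x y, U y -> x <= y -> U x.
  by move=> x y Uy xy; rewrite /U /=; apply: le_trans Uy (psi_mono _ _ xy).
have mU : measurable U := @downset_meas _ U dU.
have -> : [set w | EV <= rstarE alpha eps a (fun k => r k w)] = mn @^-1` U.
  by apply/seteqP; split => w /=; rewrite H1.
have mE : measurable (mn @^-1` U) by have := mmn measurableT U mU; rewrite setTI.
have Uss : U ss.
  apply: lb_le_inf (Sne ss) _ => y [mu [t [t0 ->]]].
  exact: (@EVaR_le _ _ _ P Rv a b alpha eps ss mu t PD alP t0 ass Pss).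
pose G := mn @^-1` `]-oo, ss].
have mG : measurable G by have := mmn measurableT _ (measurable_itv `]-oo, ss]); rewrite setTI.
have GE : G `<=` mn @^-1` U.
  move=> w; rewrite /G /= in_itv /= => h; exact: dU h.
have hGE : (P G <= P (mn @^-1` U))%E by apply: le_measure => //; rewrite inE.
apply: le_trans hGE.
have CG : ~` G = \bigcap_(i in [set: 'I_n.+1]) ((fun i => (r i : T -> R)) i @^-1` `]ss, +oo[).
  apply/seteqP; split => w; rewrite /G /= in_itv /=.
    move=> /negP; rewrite -ltNge => /bigmin_gtP [_ h] i _ /=.
    by rewrite in_itv /= andbT; apply: h.
  move=> h; apply/negP; rewrite -ltNge; apply/bigmin_gtP; split.
    by have := h ord0 I; rewrite /= in_itv /= andbT.
  by move=> i _; have := h i I; rewrite /= in_itv /= andbT.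
have hind := indep (fun=> `]ss, +oo[%classic) (fun=> measurable_itv _).
have hq : fine (P (~` G)) = fine (P (Rv @^-1` `]ss, +oo[)) ^+ n.+1.
  rewrite CG hind.
  rewrite (eq_bigr (fun=> fine (P (Rv @^-1` `]ss, +oo[)))); last first.
    move=> i _ /=; have := congr1 (fun m => m `]ss, +oo[%classic) (dist i).
    by rewrite /distribution /pushforward /= => ->.
  by rewrite prodr_const card_ord.
have q0 : 0 <= fine (P (Rv @^-1` `]ss, +oo[)) by apply: fine_ge0; exact: measure_ge0.
have hq2 : fine (P (~` G)) <= 1 - gamma.
  rewrite hq; apply: le_trans powb; apply: lerXn2r; rewrite ?nnegrE //; lra.
have mCG : measurable (~` G) by exact: measurableC.
have := probability_setC P mCG; rewrite setCK => ->.
rewrite (pfin P _ mCG) -EFinB lee_fin; lra.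
Qed.
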